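(* Let $k\ge 2$ be an integer, let $\chi$ be a set, and let $d_H:\chi^k\to[0,\infty)$ be an $H$-metric with parameter $\gamma$. Define $d:\chi^2\to[0,\infty)$ by $$d(p_1,p_2):=d_H(p_1,\underbrace{p_2,\ldots,p_2}_{k-1})+d_H(p_2,\underbrace{p_1,\ldots,p_1}_{k-1}).$$ Then $d$ is a metric on $\chi$ (symmetric, $d(p,q)\ge 0$ with equality iff $p=q$, and satisfying the triangle inequality), and for all $p_1,\ldots,p_k\in\chi$ and every $v\in\{p_1,\ldots,p_k\}$, $$\frac{1}{\gamma k^2}\sum_{i=1}^{k-1}\sum_{j=i+1}^{k} d(p_i,p_j)\;\le\; d_H(p_1,\ldots,p_k)\;\le\;\sum_{i=1}^k d(v,p_i).$$
   Context: For a multiset $S$ of elements of $\chi$, $elem(S)$ denotes the set of distinct elements of $S$. An $H$-metric with parameter $\gamma$ (where $\gamma$ is an integer with $1\le\gamma\le k-1$) is a function $d_H:\chi^k\to[0,\infty)$ satisfying: ($\Pi$) $d_H(p_1,\ldots,p_k)$ is invariant under permuting its arguments; ($O_D$) $d_H(p_1,\ldots,p_k)\ge 0$, with equality if and only if $p_1=\cdots=p_k$; ($\Delta_H$) for all $p_1,\ldots,p_k,a\in\chi$ and all $i\in\{1,\ldots,k\}$, $d_H(p_1,\ldots,p_k)\le d_H(p_1,\ldots,p_i,a,\ldots,a)+d_H(a,\ldots,a,p_{i+1},\ldots,p_k)$, where $a$ appears $k-i$ times in the first term and $i$ times in the second; ($\mathcal S_H$) for all $p_1,\ldots,p_k,p'_1,\ldots,p'_k\in\chi$: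 if $elem(\{p_1,\ldots,p_k\})\subsetneq elem(\{p'_1,\ldots,p'_k\})$ then $d_H(p_1,\ldots,p_k)\le d_H(p'_1,\ldots,p'_k)$, and if $elem(\{p_1,\ldots,p_k\})= elem(\{p'_1,\ldots,p'_k\})$ then $d_H(p_1,\ldots,p_k)\le \gamma\, d_H(p'_1,\ldots,p'_k)$. *)

(* Defs.v *)
From HB Require Import structures.
From mathcomp Require Import all_boot all_order all_algebra all_fingroup.
Set Implicit Arguments. Unset Strict Implicit. Unset Printing Implicit Defensive.
Import Order.TTheory GRing.Theory Num.Theory.
Local Open Scope ring_scope.

Definition elem (chi : Type) (k : nat) (p : 'I_k -> chi) (x : chi) : Prop :=
  exists i : 'I_k, p i = x.

Definition elem_subset (chi : Type) (k : nat) (p q : 'I_k -> chi) : Prop :=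
  forall x, elem p x -> elem q x.

Definition elem_ssubset (chi : Type) (k : nat) (p q : 'I_k -> chi) : Prop :=
  elem_subset p q /\ ~ elem_subset q p.

Definition elem_eq (chi : Type) (k : nat) (p q : 'I_k -> chi) : Prop :=
  elem_subset p q /\ elem_subset q p.

Definition prefix_fill (chi : Type) (k : nat) (i : nat) (p : 'I_k -> chi) (a : chi)
  : 'I_k -> chi := fun j => if (j < i)%N then p j else a.
Definition suffix_fill (chi : Type) (k : nat) (i : nat) (p : 'I_k -> chi) (a : chi)
  : 'I_k -> chi := fun j => if (j < i)%N then a else p j.

Definition is_Hmetric (R : realFieldType) (chi : Type) (k : nat) (gamma : nat)
  (dH : ('I_k -> chi) -> R) : Prop :=
  [/\ (1 <= gamma <= k.-1)%N,
      (forall (s : 'S_k) (p : 'I_k -> chi), dH (fun i => p (s i)) = dH p),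
      (forall p, 0 <= dH p /\ (dH p = 0 <-> forall i j, p i = p j)),
      (forall (p : 'I_k -> chi) (a : chi) (i : nat), (1 <= i <= k)%N ->
          dH p <= dH (prefix_fill i p a) + dH (suffix_fill i p a))
    & (forall p q : 'I_k -> chi,
          (elem_ssubset p q -> dH p <= dH q) /\
          (elem_eq p q -> dH p <= gamma%:R * dH q))].

Definition pair_tuple (chi : Type) (k : nat) (x y : chi) : 'I_k -> chi :=
  fun j => if val j == 0%N then x else y.

Definition dist_of (R : realFieldType) (chi : Type) (k : nat)
  (dH : ('I_k -> chi) -> R) (x y : chi) : R :=
  dH (pair_tuple x y) + dH (pair_tuple y x).

(* Main.v *)
Require Import Defs.
From HB Require Import structures.
From mathcomp Require Import all_boot all_order all_algebra all_fingroup.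
From mathcomp Require Import ring lra.
From Stdlib Require Import FunctionalExtensionality Classical.
Import Order.TTheory GRing.Theory Num.Theory.
Local Open Scope ring_scope.

Lemma single_pair (R : realFieldType) (chi : Type) (k : nat)
  (dH : ('I_k -> chi) -> R)
  (HPi : forall (s : 'S_k) (p : 'I_k -> chi), dH (fun i => p (s i)) = dH p)
  (o0 m : 'I_k) (Ho : val o0 = 0%N) (x v : chi) :
  dH (fun j => if j == m then x else v) = dH (pair_tuple x v).
Proof.
rewrite -(HPi (tperm o0 m) (fun j => if j == m then x else v)).
congr dH; apply: functional_extensionality => j /=.
rewrite -[X in _ == X](tpermL o0 m) (inj_eq perm_inj) /pair_tuple -val_eqE Ho.
by [].
Qed.

Lemma pair_const (R : realFieldType) (chi : Type) (k : nat)
  (dH : ('I_k -> chi) -> R)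
  (HO : forall p, 0 <= dH p /\ (dH p = 0 <-> forall i j, p i = p j)) x :
  dH (pair_tuple x x) = 0.
Proof. by apply/(HO _).2 => i j; rewrite /pair_tuple; case: ifP; case: ifP. Qed.

Lemma upper_aux (R : realFieldType) (chi : Type) (k : nat)
  (dH : ('I_k -> chi) -> R)
  (HPi : forall (s : 'S_k) (p : 'I_k -> chi), dH (fun i => p (s i)) = dH p)
  (HO : forall p, 0 <= dH p /\ (dH p = 0 <-> forall i j, p i = p j))
  (HD : forall (p : 'I_k -> chi) (a : chi) (i : nat), (1 <= i <= k)%N ->
          dH p <= dH (prefix_fill i p a) + dH (suffix_fill i p a))
  (o0 : 'I_k) (Ho : val o0 = 0%N) (v : chi) (n : nat) :
  (n <= k)%N -> forall q : 'I_k -> chi, (forall j : 'I_k, (n <= j)%N -> q j = v) ->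
  dH q <= \sum_(j < k | (j < n)%N) dH (pair_tuple (q j) v).
Proof.
elim: n => [|n IH] Hn q Hq.
  have -> : dH q = 0 by apply/(HO _).2 => i j; rewrite !Hq.
  by rewrite big_pred0 // => j; rewrite ltn0.
have nk : (n < k)%N by [].
set m := Ordinal nk.
have Hm : forall j : 'I_k, (j == m) = (val j == n) by move=> j; rewrite -val_eqE.
rewrite (bigD1 m) /=; last by rewrite ltnS.
have -> : \sum_(i < k | (i < n.+1)%N && (i != m)) dH (pair_tuple (q i) v)
        = \sum_(i < k | (i < n)%N) dH (pair_tuple (q i) v).
  by apply: eq_bigl => j; rewrite -val_eqE /= ltnS ltn_neqAle andbC.
have single : dH (fun j => if j == m then q m else v) = dH (pair_tuple (q m) v).
  exact: (@single_pair R chi k dH HPi o0 m Ho (q m) v).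
case: n IH Hn Hq nk @m Hm single => [|n] IH Hn Hq nk m Hm single.
  rewrite big_pred0; last by move=> j; rewrite ltn0.
  rewrite addr0 -single le_eqVlt; apply/orP; left; apply/eqP; congr dH.
  apply: functional_extensionality => j.
  case: ifP => [/eqP -> //|]; rewrite Hm => /negbT Hj; apply: Hq.
  by rewrite lt0n.
apply: le_trans (HD q v n.+1 _) _; first by rewrite /= ltnW.
rewrite addrC; apply: lerD; last first.
  rewrite -single le_eqVlt; apply/orP; left; apply/eqP; congr dH.
  apply: functional_extensionality => j; rewrite /suffix_fill Hm.
  case: (ltngtP j n.+1) => //= H.
  - by apply: Hq.
  - by congr q; apply: val_inj.
apply: le_trans (IH (ltnW Hn) (prefix_fill n.+1 q v) _) _.
  by move=> j Hj; rewrite /prefix_fill ltnNge Hj.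
rewrite le_eqVlt; apply/orP; left; apply/eqP; apply: eq_bigr => j Hj.
by rewrite /prefix_fill Hj.
Qed.

Theorem theorem1 (R : realFieldType) (chi : Type) (k gamma : nat)
  (dH : ('I_k -> chi) -> R) :
  (2 <= k)%N -> is_Hmetric gamma dH ->
  let d := dist_of dH in
  ((forall x y, d x y = d y x) /\
   (forall x y, 0 <= d x y) /\
   (forall x y, d x y = 0 <-> x = y) /\
   (forall x y z, d x z <= d x y + d y z)) /\
  (forall (p : 'I_k -> chi) (v : chi), elem p v ->
     (gamma%:R * (k%:R ^+ 2))^-1 *
       (\sum_(i < k) \sum_(j < k | (i < j)%N) d (p i) (p j)) <= dH p /\
     dH p <= \sum_(i < k) d v (p i)).
Proof.
move=> k2 [Hg HPi HO HD HS] d; rewrite {}/d.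
have k0 : (0 < k)%N by apply: leq_trans k2.
set o0 := Ordinal k0.
set o1 := Ordinal k2.
have tri : forall x y z, dH (pair_tuple x z) <= dH (pair_tuple x y) + dH (pair_tuple y z).
  move=> x y z; apply: le_trans (HD (pair_tuple x z) y 1%N _) _; first by rewrite /= k0.
  apply: lerD; rewrite le_eqVlt; apply/orP; left; apply/eqP; congr dH;
  apply: functional_extensionality => -[[|j] Hj];
  by rewrite /prefix_fill /suffix_fill /pair_tuple.
split; [split; [|split; [|split]]|].
- by move=> x y; rewrite /dist_of addrC.
- by move=> x y; apply: addr_ge0; apply: (HO _).1.
- move=> x y; split; last by move=> ->; rewrite /dist_of pair_const // addr0.
  move/eqP; rewrite /dist_of paddr_eq0 ?(HO _).1 // => /andP [/eqP h _].
  by have := (HO _).2.1 h o0 o1; rewrite /pair_tuple /=.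
- move=> x y z; rewrite /dist_of.
  have := tri x y z; have := tri z y x; lra.
move=> p v _; split.
  have g1 : 1 <= gamma%:R :> R by rewrite ler1n; case/andP: Hg.
  have pair_le : forall i j, dH (pair_tuple (p i) (p j)) <= gamma%:R * dH p.
    move=> i j.
    have sub : elem_subset (pair_tuple (p i) (p j)) p.
      by move=> x [l <-]; rewrite /pair_tuple; case: ifP => _; [exists i|exists j].
    case: (classic (elem_subset p (pair_tuple (p i) (p j)))) => h.
      exact: (HS _ _).2 (conj sub h).
    apply: le_trans ((HS _ _).1 (conj sub h)) _.
    have := (HO p).1; nra.
  set f := fun i j : 'I_k => dH (pair_tuple (p i) (p j)).
  have f0 : forall i j, 0 <= f i j by move=> i j; apply: (HO _).1.
  have -> : \sum_(i < k) \sum_(j < k | (i < j)%N) dist_of dH (p i) (p j)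
      = \sum_(i < k) \sum_(j < k) (if (i < j)%N then f i j else 0)
        + \sum_(i < k) \sum_(j < k) (if (j < i)%N then f i j else 0).
    rewrite [X in _ = _ + X]exchange_big /= -big_split /=; apply: eq_bigr => i _.
    rewrite big_mkcond -big_split /=; apply: eq_bigr => j _.
    by case: ifP => _; rewrite ?addr0.
  set S := (X in _ * X <= _).
  have HS1 : S <= \sum_(i < k) \sum_(j < k) f i j.
    rewrite /S -big_split; apply: ler_sum => i _; rewrite -big_split.
    apply: ler_sum => j _; case: (ltngtP i j) => _; rewrite /= ?addr0 ?add0r //; exact: f0.
  have HS2 : \sum_(i < k) \sum_(j < k) f i j <= \sum_(i < k) \sum_(j < k) (gamma%:R * dH p).
    by apply: ler_sum => i _; apply: ler_sum => j _; apply: pair_le.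
  rewrite !sumr_const card_ord in HS2.
  have kpos : 0 < k%:R :> R by rewrite ltr0n.
  rewrite ler_pdivrMl; last by apply: mulr_gt0; [lra|apply: exprn_gt0].
  have E : (gamma%:R * dH p) *+ k *+ k = gamma%:R * k%:R ^+ 2 * dH p.
    by rewrite -mulrnA -[(_ * dH p) *+ _]mulr_natr natrM expr2 mulrAC.
  rewrite -E; exact: (le_trans HS1 HS2).
have Hk : forall j : 'I_k, (k <= j)%N -> p j = v by move=> j; rewrite leqNgt ltn_ord.
apply: le_trans (@upper_aux R chi k dH HPi HO HD o0 erefl v k (leqnn k) p Hk) _.
rewrite big_mkcond /=; apply: ler_sum => j _; rewrite ltn_ord /dist_of.
have := (HO (pair_tuple v (p j))).1; lra.
Qed.
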